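(* Let $\tau,C_1,C_2>0$ and let $y\in C([-\tau,\infty))$ be a nonnegative function, differentiable on $(-\tau,0)$ and continuously differentiable on $(0,\infty)$, such that $$|\dot y(t)|\le C_1y(t)+C_2y(t-\tau)\qquad\text{for all }t>0.$$ Let $$M:=\max\Big\{\sup_{s\in(-\tau,0)}\frac{|\dot y(s)|}{y(s)},\ \frac{|\dot y(0^+)|}{y(0)}\Big\}<\infty,$$ where $\dot y(0^+)$ is the right derivative of $y$ at $0$. If there exists $\kappa>0$ with $$\kappa>\max\{M,\ C_1+C_2e^{\kappa\tau}\},$$ then for all $s,t>0$ with $-\tau<t-s$, $$e^{-\kappa s}y(t)<y(t-s)<e^{\kappa s}y(t).$$ *)

(* Defs.v *)
From Stdlib Require Import Reals.
From Coquelicot Require Import Coquelicot.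
Open Scope R_scope.

Definition Rbar_maxR (a : Rbar) (b : R) : Rbar :=
  match a with
  | Finite x => Finite (Rmax x b)
  | p_infty => p_infty
  | m_infty => Finite b
  end.

Definition sup_ratio (y : R -> R) (tau : R) : Rbar :=
  Lub_Rbar (fun r => exists s, -tau < s < 0 /\ r = Rabs (Derive y s) / y s).

(* M := max { sup_{s in (-tau,0)} |y'(s)|/y(s), |y'(0+)|/y(0) },
   where d is the right derivative of y at 0 *)
Definition Mconst (y : R -> R) (tau d : R) : Rbar :=
  Rbar_maxR (sup_ratio y tau) (Rabs d / y 0).

(* Main.v *)
Require Import Defs.
From Stdlib Require Import Reals Lra Classical.
From Coquelicot Require Import Coquelicot.
Open Scope R_scope.
Lemma cont_eps (g : R -> R) x (D : R -> Prop) e : 0 < e ->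
  filterlim g (within D (locally x)) (locally (g x)) ->
  exists d, 0 < d /\ forall z, Rabs (z - x) < d -> D z -> Rabs (g z - g x) < e.
Proof.
  intros He H.
  destruct (H (ball (g x) (mkposreal e He)) (locally_ball _ _)) as [d Hd].
  exists d. split. apply cond_pos.
  intros z Hz HD. apply (Hd z); auto.
Qed.

Lemma ML0 (f df : R -> R) a b : a < b ->
  (forall x, a <= x <= b -> continuity_pt f x) ->
  (forall x, a < x < b -> derivable_pt_lim f x (df x) /\ 0 < df x) -> f a < f b.
Proof.
  intros Hab Hc Hd.
  pose (pr1 := fun c (P : a < c < b) => exist (fun l => derivable_pt_abs f c l) (df c) (proj1 (Hd c P)) : derivable_pt f c).
  destruct (MVT f id a b pr1 (fun c _ => derivable_pt_id c) Hab Hc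
     (fun c _ => derivable_continuous_pt _ _ (derivable_pt_id c))) as [c [P HP]].
  rewrite derive_pt_id in HP. simpl in HP.
  destruct (Hd c P) as [_ Hpos]. unfold id in HP. nra.
Qed.

Lemma ML (f df : R -> R) a b : a < b ->
  (forall x, a <= x <= b -> continuity_pt f x) ->
  (forall x, a < x < b -> x <> 0 -> derivable_pt_lim f x (df x) /\ 0 < df x) -> f a < f b.
Proof.
  intros Hab Hc Hd.
  destruct (Rlt_dec a 0) as [Ha|Ha]; destruct (Rlt_dec 0 b) as [Hb|Hb].
  - apply Rlt_trans with (f 0).
    + apply (ML0 f df); auto. intros; apply Hc; lra. intros; apply Hd; lra.
    + apply (ML0 f df); auto. intros; apply Hc; lra. intros; apply Hd; lra.
  - apply (ML0 f df); auto. intros; apply Hd; lra.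
  - apply (ML0 f df); auto. intros; apply Hd; lra.
  - apply (ML0 f df); auto. intros; apply Hd; lra.
Qed.

Lemma EndLim (g : R -> R) x b L : x < b ->
  filterlim g (within (fun z => x <= z) (locally x)) (locally (g x)) ->
  (forall z, x < z < b -> g z <= L) -> g x <= L.
Proof.
  intros Hxb Hc Hz.
  destruct (Rle_dec (g x) L) as [ok|nok]; auto. exfalso.
  destruct (cont_eps g x _ (g x - L) ltac:(lra) Hc) as [d [Hd Hdz]].
  pose (z := x + Rmin d (b - x) / 2).
  assert (H1 : 0 < Rmin d (b - x)) by (apply Rmin_pos; lra).
  assert (H2 := Rmin_l d (b - x)). assert (H3 := Rmin_r d (b - x)).
  specialize (Hdz z). specialize (Hz z).
  assert (Hzx : Rabs (z - x) < d). { unfold z. rewrite Rabs_pos_eq; lra. }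
  specialize (Hdz Hzx ltac:(unfold z; lra)).
  specialize (Hz ltac:(unfold z; lra)).
  apply Rabs_def2 in Hdz. lra.
Qed.
Theorem lemma3p5 (tau C1 C2 : R) (y : R -> R) (d kappa : R)
  (Htau : 0 < tau) (HC1 : 0 < C1) (HC2 : 0 < C2)
  (* y continuous on [-tau, oo) *)
  (Hcont : forall t, -tau <= t ->
     filterlim y (within (fun x => -tau <= x) (locally t)) (locally (y t)))
  (* y nonnegative *)
  (Hnn : forall t, -tau <= t -> 0 <= y t)
  (* differentiable on (-tau,0) *)
  (Hdiff_neg : forall s, -tau < s < 0 -> ex_derive y s)
  (* continuously differentiable on (0,oo) *)
  (Hdiff_pos : forall t, 0 < t -> ex_derive y t)
  (Hcont_deriv : forall t, 0 < t -> continuous (Derive y) t)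
  (* d is the right derivative of y at 0 *)
  (Hd : filterlim (fun h => (y h - y 0) / h) (at_right 0) (locally d))
  (* delay differential inequality *)
  (Hineq : forall t, 0 < t -> Rabs (Derive y t) <= C1 * y t + C2 * y (t - tau))
  (* M is well defined: the denominators y(s), s in (-tau,0], are nonzero *)
  (Hpos : forall s, -tau < s <= 0 -> 0 < y s)
  (* M < oo *)
  (HMfin : Rbar_lt (Mconst y tau d) p_infty)
  (Hkappa : 0 < kappa)
  (HkM : Rbar_lt (Mconst y tau d) (Finite kappa))
  (HkC : C1 + C2 * exp (kappa * tau) < kappa) :
  forall s t, 0 < s -> 0 < t -> -tau < t - s ->
    exp (- kappa * s) * y t < y (t - s) /\ y (t - s) < exp (kappa * s) * y t.
Proof.
  assert (ycont : forall x, -tau < x -> continuity_pt y x).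
  { intros x Hx. unfold continuity_pt, continue_in, limit1_in, limit_in; simpl.
    intros e He.
    destruct (cont_eps y x _ e He (Hcont x (Rlt_le _ _ Hx))) as [dd [Hdd Hz]].
    exists (Rmin dd (x + tau)). split. apply Rmin_pos; lra.
    intros z [_ Hz']. unfold R_dist in *.
    assert (H2 := Rmin_l dd (x + tau)). assert (H3 := Rmin_r dd (x + tau)).
    apply Hz. lra. apply Rabs_def2 in Hz'. lra. }
  assert (ratio : forall x, -tau < x < 0 -> Rabs (Derive y x) < kappa * y x).
  { intros x Hx.
    pose proof (Lub_Rbar_correct (fun r => exists s, -tau < s < 0 /\ r = Rabs (Derive y s) / y s)) as [Hub _].
    specialize (Hub (Rabs (Derive y x) / y x) (ex_intro _ x (conj Hx eq_refl))).
    unfold Mconst, sup_ratio in HkM.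
    revert Hub HkM.
    generalize (Lub_Rbar (fun r => exists s, -tau < s < 0 /\ r = Rabs (Derive y s) / y s)).
    intros [m| |] Hub HkM; simpl in *; try contradiction.
    assert (Hm := Rmax_l m (Rabs d / y 0)).
    assert (Hy : 0 < y x) by (apply Hpos; lra).
    assert (Rabs (Derive y x) = (Rabs (Derive y x) / y x) * y x) by (field; lra).
    nra. }
  assert (ederiv : forall x, x <> 0 -> -tau < x -> ex_derive y x).
  { intros x H0 Hx. destruct (Rlt_dec x 0). apply Hdiff_neg; lra. apply Hdiff_pos; lra. }
  assert (expc : forall c x, continuity_pt (fun u => exp (c * u)) x).
  { intros c x. apply continuity_pt_filterlim. apply (ex_derive_continuous (fun u => exp (c * u))).
    auto_derive; auto. }
  assert (hmono : forall a b, -tau < a -> a < b ->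
     (forall x, a < x < b -> x <> 0 -> Rabs (Derive y x) < kappa * y x) ->
     y a * exp (kappa * a) < y b * exp (kappa * b)).
  { intros a b Ha Hab Hg.
    apply (ML (fun u => y u * exp (kappa * u))
             (fun u => Derive y u * exp (kappa * u) + y u * (kappa * exp (kappa * u)))); auto.
    - intros x Hx. apply (continuity_pt_mult y (fun u => exp (kappa * u))).
      apply ycont; lra. apply expc.
    - intros x Hx Hx0. split.
      + apply is_derive_Reals. auto_derive. apply ederiv; lra. change (fun x0 => y x0) with y. ring.
      + assert (He := exp_pos (kappa * x)). specialize (Hg x Hx Hx0).
        assert (Hr := Rle_abs (- Derive y x)). rewrite Rabs_Ropp in Hr. nra. }
  assert (kmono : forall a b, -tau < a -> a < b ->
     (forall x, a < x < b -> x <> 0 -> Rabs (Derive y x) < kappa * y x) ->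
     y b * exp (- kappa * b) < y a * exp (- kappa * a)).
  { intros a b Ha Hab Hg.
    cut (- (y a * exp (- kappa * a)) < - (y b * exp (- kappa * b))). lra.
    apply (ML (fun u => - (y u * exp (- kappa * u)))
             (fun u => - (Derive y u * exp (- kappa * u) + y u * (- kappa * exp (- kappa * u))))); auto.
    - intros x Hx. apply continuity_pt_opp.
      apply (continuity_pt_mult y (fun u => exp (- kappa * u))).
      apply ycont; lra. apply expc.
    - intros x Hx Hx0. split.
      + apply is_derive_Reals. auto_derive. apply ederiv; lra. change (fun x0 => y x0) with y. ring.
      + assert (He := exp_pos (- kappa * x)). specialize (Hg x Hx Hx0).
        assert (Hr := Rle_abs (Derive y x)). nra. }
  assert (K : forall u, 0 < u -> Rabs (Derive y u) < kappa * y u).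
  { intros u0 Hu0.
    destruct (Rlt_dec (Rabs (Derive y u0)) (kappa * y u0)) as [ok|nok]; [exact ok|exfalso].
    pose (E := fun u => 0 < u /\ kappa * y u <= Rabs (Derive y u)).
    assert (HE0 : E u0) by (split; [exact Hu0 | lra]).
    generalize (Glb_Rbar_correct E). generalize (Glb_Rbar E).
    intros g [Hlb Hgr].
    assert (G0 : Rbar_le 0 g). { apply Hgr. intros x [Hx _]. simpl. lra. }
    assert (G1 := Hlb u0 HE0).
    destruct g as [t| |]; simpl in G0, G1; try contradiction.
    assert (F1 : forall x, E x -> t <= x) by (intros x Hx; exact (Hlb x Hx)).
    assert (F4 : forall x, 0 < x < t -> Rabs (Derive y x) < kappa * y x).
    { intros x Hx. destruct (Rlt_dec (Rabs (Derive y x)) (kappa * y x)) as [o|n]; auto.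
      exfalso. assert (E x) by (split; lra). specialize (F1 x H). lra. }
    assert (good : forall x, -tau < x < t -> x <> 0 -> Rabs (Derive y x) < kappa * y x).
    { intros x Hx Hx0. destruct (Rlt_dec x 0). apply ratio; lra. apply F4; lra. }
    assert (Hy0 := Hpos 0 ltac:(lra)).
    assert (Hyt : 0 < y t).
    { destruct G0 as [tp|t0].
      - assert (H := hmono 0 t ltac:(lra) tp ltac:(intros; apply good; lra)).
        rewrite Rmult_0_r, exp_0, Rmult_1_r in H.
        assert (He := exp_pos (kappa * t)).
        destruct (Rlt_dec 0 (y t)); auto. assert (Hn := Hnn t ltac:(lra)). nra.
      - subst t. exact Hy0. }
    assert (Hyt2 : y (t - tau) <= exp (kappa * tau) * y t).
    { destruct G0 as [tp|t0].
      - assert (H := hmono (t - tau) t ltac:(lra) ltac:(lra) ltac:(intros; apply good; lra)).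
        assert (Hx : exp (kappa * t) = exp (kappa * (t - tau)) * exp (kappa * tau)).
        { rewrite <- exp_plus. f_equal. ring. }
        rewrite Hx in H. assert (He := exp_pos (kappa * (t - tau))). nra.
      - subst t. replace (0 - tau) with (- tau) by ring.
        apply (EndLim y (- tau) 0); [lra | apply Hcont; lra |].
        intros z Hz.
        assert (H := hmono z 0 ltac:(lra) ltac:(lra) ltac:(intros; apply good; lra)).
        rewrite Rmult_0_r, exp_0, Rmult_1_r in H.
        assert (Hp : 1 < exp (kappa * tau) * exp (kappa * z)).
        { rewrite <- exp_plus. rewrite <- exp_0. apply exp_increasing. nra. }
        assert (Hn := Hnn z ltac:(lra)).
        assert (Et := exp_pos (kappa * tau)).
        assert (y z <= y z * (exp (kappa * tau) * exp (kappa * z))) by nra.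
        assert (y z * (exp (kappa * tau) * exp (kappa * z)) = exp (kappa * tau) * (y z * exp (kappa * z))) by ring.
        assert (exp (kappa * tau) * (y z * exp (kappa * z)) < exp (kappa * tau) * y 0)
          by (apply Rmult_lt_compat_l; lra).
        lra. }
    pose (phi := C2 * y (t - tau) - (kappa - C1) * y t).
    assert (Hphi : phi < 0).
    { unfold phi. assert (C2 * exp (kappa * tau) < kappa - C1) by lra.
      assert (C2 * y (t - tau) <= C2 * (exp (kappa * tau) * y t)) by (apply Rmult_le_compat_l; lra).
      nra. }
    pose (Kc := C2 + (kappa - C1) + 1).
    assert (0 < C2 * exp (kappa * tau)) by (apply Rmult_lt_0_compat; [lra | apply exp_pos]).
    assert (HK : 0 < Kc) by (unfold Kc; lra).
    pose (e := - phi / Kc).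
    assert (Hee : Kc * e = - phi) by (unfold e; field; lra).
    assert (He : 0 < e) by nra.
    destruct (cont_eps y t _ e He (Hcont t ltac:(lra))) as [d1 [Hd1 H1]].
    destruct (cont_eps y (t - tau) _ e He (Hcont (t - tau) ltac:(lra))) as [d2 [Hd2 H2]].
    pose (dl := Rmin d1 d2).
    assert (Hdl : 0 < dl) by (apply Rmin_pos; lra).
    assert (Hm1 := Rmin_l d1 d2). assert (Hm2 := Rmin_r d1 d2).
    destruct (classic (exists x, E x /\ x < t + dl)) as [[x [Ex Hx]]|Hno].
    - assert (Htx := F1 x Ex). destruct Ex as [Hx0 Hx1].
      assert (Ha : Rabs (x - t) < d1) by (rewrite Rabs_pos_eq; unfold dl in *; lra).
      assert (Hb : Rabs (x - tau - (t - tau)) < d2) by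
        (replace (x - tau - (t - tau)) with (x - t) by ring; rewrite Rabs_pos_eq; unfold dl in *; lra).
      specialize (H1 x Ha ltac:(lra)). specialize (H2 (x - tau) Hb ltac:(lra)).
      apply Rabs_def2 in H1. apply Rabs_def2 in H2.
      assert (Hi := Hineq x Hx0).
      assert (C2 * y (x - tau) < C2 * (y (t - tau) + e)) by (apply Rmult_lt_compat_l; lra).
      assert ((kappa - C1) * (y t - e) < (kappa - C1) * y x) by (apply Rmult_lt_compat_l; lra).
      unfold phi, Kc in *. nra.
    - assert (Hle : Rbar_le (t + dl) t).
      { apply Hgr. intros x Ex. simpl. destruct (Rle_dec (t + dl) x); auto.
        exfalso. apply Hno. exists x. split; auto. lra. }
      simpl in Hle. lra. }
  intros s t Hs Ht Hst.
  assert (good : forall x, t - s < x < t -> x <> 0 -> Rabs (Derive y x) < kappa * y x).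
  { intros x Hx Hx0. destruct (Rlt_dec x 0). apply ratio; lra. apply K; lra. }
  split.
  - assert (H := kmono (t - s) t Hst ltac:(lra) good).
    assert (Hx : exp (- kappa * t) = exp (- kappa * (t - s)) * exp (- kappa * s)).
    { rewrite <- exp_plus. f_equal. ring. }
    rewrite Hx in H. assert (He := exp_pos (- kappa * (t - s))). nra.
  - assert (H := hmono (t - s) t Hst ltac:(lra) good).
    assert (Hx : exp (kappa * t) = exp (kappa * (t - s)) * exp (kappa * s)).
    { rewrite <- exp_plus. f_equal. ring. }
    rewrite Hx in H. assert (He := exp_pos (kappa * (t - s))). nra.
Qed.
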